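(* Let $\lambda$ be a partition (respectively a strict partition) and let $c\ge1$. Then the number of pairs $(T,u)$, where $T$ is a standard Young tableau of shape $[\lambda]$ (respectively a shifted standard Young tableau of shape $[\lambda]^{\mathrm{sh}}$) and $(T,u)$ is a horizontal adjacency lying in column $c$, equals the number of standard Young tableaux of shape $[\lambda]$ (respectively shifted standard Young tableaux of shape $[\lambda]^{\mathrm{sh}}$) whose largest entry $|\lambda|$ lies in a column with index at least $c+1$.
   Context: Matrix coordinates (row $i$, column $j$). $[\lambda]=\{(i,j):i\in[\ell(\lambda)],j\in[\lambda_i]\}$; for strict $\lambda$, $[\lambda]^{\mathrm{sh}}=\{(i,j+i-1):i\in[\ell(\lambda)],j\in[\lambda_i]\}$. A (shifted) standard Young tableau is a bijection from the cell set $D$ to $[|\lambda|]$ increasing along rows (left to right) and columns (top to bottom). For such $T$ and $u=(i,j)\in D$, $(T,u)$ is a horizontal adjacency if $(i,j+1)\in D$ and $T(i,j+1)=T(u)+1$; it lies in column $j$ (and row $i$). *)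

(* Defs.v *)
From mathcomp Require Import all_boot.
Set Implicit Arguments. Unset Strict Implicit. Unset Printing Implicit Defensive.

Definition is_partition (l : seq nat) : bool :=
  sorted (fun x y => y <= x) l && all (fun x => 0 < x) l.

Definition is_strict_partition (l : seq nat) : bool :=
  sorted (fun x y => y < x) l && all (fun x => 0 < x) l.

(* Cells in matrix coordinates (row, column), both 1-indexed. *)
Definition young_diagram (l : seq nat) : seq (nat * nat) :=
  flatten [seq [seq (i.+1, j.+1) | j <- iota 0 (nth 0 l i)] | i <- iota 0 (size l)].

Definition shifted_diagram (l : seq nat) : seq (nat * nat) :=
  flatten [seq [seq (i.+1, (j + i).+1) | j <- iota 0 (nth 0 l i)] | i <- iota 0 (size l)].

(* A filling of the cell list D is encoded by the sequence s of its values,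
   listed in the order of D: the value at cell u is the (index u D)-th item. *)
Definition fill (D : seq (nat * nat)) (s : seq nat) (u : nat * nat) : nat :=
  nth 0 s (index u D).

Definition is_syt (D : seq (nat * nat)) (s : seq nat) : bool :=
  perm_eq s (iota 1 (size D)) &&
  all (fun u => all (fun v =>
         ((u.1 == v.1) && (u.2 < v.2) ==> (fill D s u < fill D s v)) &&
         ((u.2 == v.2) && (u.1 < v.1) ==> (fill D s u < fill D s v))) D) D.

Definition syts (D : seq (nat * nat)) : seq (seq nat) :=
  [seq s <- permutations (iota 1 (size D)) | is_syt D s].

Definition hadj_in_col (D : seq (nat * nat)) (s : seq nat) (c : nat)
    (u : nat * nat) : bool :=
  [&& u \in D, u.2 == c, (u.1, u.2.+1) \in D &
      fill D s (u.1, u.2.+1) == (fill D s u).+1].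

Definition num_hadj (D : seq (nat * nat)) (c : nat) : nat :=
  sumn [seq count (hadj_in_col D s c) D | s <- syts D].

Definition num_max_right (D : seq (nat * nat)) (c : nat) : nat :=
  count (fun s => has (fun u => (fill D s u == size D) && (c.+1 <= u.2)) D)
        (syts D).

Example ex1 : size (syts (young_diagram [:: 2; 1])) = 2. Proof. by []. Qed.
Example ex2 : size (syts (shifted_diagram [:: 3; 1])) = 2. Proof. by []. Qed.
Example ex3 : num_hadj (young_diagram [:: 2; 1]) 1 = 1 /\ num_max_right (young_diagram [:: 2; 1]) 1 = 1. Proof. by []. Qed.

(* Main.v *)
Require Import Defs.
From mathcomp Require Import all_boot.
From mathcomp Require Import zify.
Set Implicit Arguments. Unset Strict Implicit. Unset Printing Implicit Defensive.

Definition tau k x := if x == k then k.+1 else if x == k.+1 then k else x.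

Lemma tauK k : involutive (tau k).
Proof. move=> x; rewrite /tau; do !(case: eqP => /=); lia. Qed.

Lemma tau_lt k x y : x < y -> ~~ ((x == k) && (y == k.+1)) -> tau k x < tau k y.
Proof. rewrite /tau; do !(case: eqP => /=); lia. Qed.

Lemma count_split (T : Type) (p r : pred T) s :
  count p s = count (fun x => p x && r x) s + count (fun x => p x && ~~ r x) s.
Proof. elim: s => //= x s ->; case: (p x); case: (r x) => /=; lia. Qed.

Lemma count_add (T : eqType) (p q r : pred T) s :
  (forall x, x \in s -> (p x : nat) = q x + r x) -> count p s = count q s + count r s.
Proof.
elim: s => //= x s IH H; rewrite IH; last by move=> y Hy; apply: H; rewrite inE Hy orbT.
rewrite H ?inE ?eqxx //; lia.
Qed.

Lemma sumn_exchange (A B : Type) (P : A -> B -> bool) (S : seq A) (X : seq B) :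
  sumn [seq count (P s) X | s <- S] = sumn [seq count (fun s => P s k) S | k <- X].
Proof.
elim: S => /= [|s S IH]; first by elim: X.
rewrite IH; elim: X {IH} => //= k X IH; rewrite -IH; lia.
Qed.

Section Core.
Variable D : seq (nat * nat).
Hypothesis Duniq : uniq D.
Hypothesis Dcont : forall i a b x, (i,a) \in D -> (i,b) \in D -> a < x < b -> (i,x) \in D.
Hypothesis Dmin : forall u, u \in D -> 1 < u.2 ->
  exists2 v, v \in D & ((v.1 == u.1) && (v.2 < u.2)) || ((v.2 == u.2) && (v.1 < u.1)).
Variable c : nat.
Hypothesis hc : 1 <= c.

Local Notation n := (size D).
Definition cell (s : seq nat) m := nth (0,0) D (index m s).

Lemma memS s : (s \in syts D) = is_syt D s.
Proof. by rewrite mem_filter mem_permutations andb_idr // => /andP[]. Qed.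

Lemma uniqS : uniq (syts D).
Proof. by rewrite filter_uniq // permutations_uniq. Qed.

Section S.
Variable s : seq nat.
Hypothesis Hs : is_syt D s.

Lemma syt_perm : perm_eq s (iota 1 n). Proof. by case/andP: Hs. Qed.
Lemma syt_size : size s = n. Proof. by rewrite (perm_size syt_perm) size_iota. Qed.
Lemma syt_uniq : uniq s. Proof. by rewrite (perm_uniq syt_perm) iota_uniq. Qed.
Lemma syt_mem m : (m \in s) = (0 < m <= n).
Proof. rewrite (perm_mem syt_perm) mem_iota; lia. Qed.
Lemma fill_in u : u \in D -> fill D s u \in s.
Proof. by move=> Hu; rewrite /fill mem_nth // syt_size index_mem. Qed.
Lemma cell_fill u : u \in D -> cell s (fill D s u) = u.
Proof.
by move=> Hu; rewrite /cell /fill index_uniq ?nth_index ?syt_uniq // syt_size index_mem.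
Qed.
Lemma cell_in m : m \in s -> cell s m \in D.
Proof. by move=> Hm; rewrite /cell mem_nth // -syt_size index_mem. Qed.
Lemma fill_cell m : m \in s -> fill D s (cell s m) = m.
Proof.
by move=> Hm; rewrite /fill /cell index_uniq ?nth_index // -syt_size index_mem.
Qed.
Lemma syt_row u v : u \in D -> v \in D -> u.1 = v.1 -> u.2 < v.2 -> fill D s u < fill D s v.
Proof.
move=> Hu Hv e lt; case/andP: Hs => _ /allP H.
have /allP H2 := H u Hu; have /andP[H3 _] := H2 v Hv.
by move: H3; rewrite e eqxx lt.
Qed.
Lemma syt_col u v : u \in D -> v \in D -> u.2 = v.2 -> u.1 < v.1 -> fill D s u < fill D s v.
Proof.
move=> Hu Hv e lt; case/andP: Hs => _ /allP H.
have /allP H2 := H u Hu; have /andP[_ H3] := H2 v Hv.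
by move: H3; rewrite e eqxx lt.
Qed.
Lemma syt_count : count (hadj_in_col D s c) D =
  count (fun k => hadj_in_col D s c (cell s k)) (iota 1 n).
Proof.
have E : map (fill D s) D = s.
  apply: (@eq_from_nth _ 0); first by rewrite size_map syt_size.
  move=> i; rewrite size_map => Hi; rewrite (nth_map (0,0)) // /fill index_uniq //.
rewrite -(permP syt_perm).
transitivity (count (fun k => hadj_in_col D s c (cell s k)) (map (fill D s) D)); last by rewrite E.
rewrite count_map; apply: eq_in_count => u Hu /=.
by rewrite cell_fill.
Qed.
End S.

Definition Hk k s := hadj_in_col D s c (cell s k).
Definition G m s := c < (cell s m).2.

Section K.
Variable k : nat.
Hypothesis hk0 : 0 < k.
Hypothesis hkn : k.+1 <= n.

Definition R s := ((cell s k).1 == (cell s k.+1).1) || ((cell s k).2 == (cell s k.+1).2).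

Lemma partA s : is_syt D s -> (G k.+1 s && R s : nat) = (G k s && R s) + Hk k s.
Proof.
move=> Hs.
have ks : k \in s by rewrite (syt_mem Hs); lia.
have k1s : k.+1 \in s by rewrite (syt_mem Hs); lia.
have uD := cell_in Hs ks; have vD := cell_in Hs k1s.
have fu := fill_cell Hs ks; have fv := fill_cell Hs k1s.
rewrite /G /R /Hk /hadj_in_col.
move: uD fu vD fv; case Eu: (cell s k) => [a b]; case Ev: (cell s k.+1) => [a' b'] uD fu vD fv /=.
rewrite fu.
case H: [&& (a, b) \in D, b == c, (a, b.+1) \in D & fill D s (a, b.+1) == k.+1].
  case/and4P: H => _ /eqP bc wD /eqP fw.
  have := cell_fill Hs wD; rewrite fw Ev => [[-> ->]].
  by rewrite bc !eqxx ltnSn ltnn.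
rewrite addn0.
case: (eqVneq b b') => [<-|nb]; first by rewrite orbT.
case: (eqVneq a a') => [ea|na] /=; last by rewrite !andbF.
rewrite !andbT; subst a'.
case: (ltngtP b b') => [lt|hgt|eq]; last by rewrite eq eqxx in nb.
- case: (ltngtP b.+1 b') => [lt2|gt2|eq2].
  + have wD : (a, b.+1) \in D by apply: (Dcont uD vD); lia.
    have h1 := syt_row Hs uD wD erefl (ltnSn b).
    have h2 := syt_row Hs wD vD erefl lt2.
    rewrite fu /= in h1; rewrite fv /= in h2; lia.
  + lia.
  + subst b'; move: H; rewrite uD vD fv eqxx /= andbT; case: eqP => //= ne _; lia.
- have := syt_row Hs vD uD erefl hgt; rewrite fu fv; lia.
Qed.

Lemma tau_k : tau k k = k.+1. Proof. by rewrite /tau eqxx. Qed.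
Lemma tau_k1 : tau k k.+1 = k. Proof. rewrite /tau; have -> : (k.+1 == k) = false by lia. by rewrite eqxx. Qed.
Lemma tau_0 : tau k 0 = 0. Proof. rewrite /tau; have -> : (0 == k) = false by lia. by have -> : (0 == k.+1) = false by lia. Qed.

Lemma fill_swap s u : fill D (map (tau k) s) u = tau k (fill D s u).
Proof.
rewrite /fill; case: (ltnP (index u D) (size s)) => h; first by rewrite (nth_map 0).
by rewrite !nth_default ?size_map // tau_0.
Qed.

Lemma cell_swap s m : cell (map (tau k) s) m = cell s (tau k m).
Proof. by rewrite /cell -{1}(tauK k m) index_map //; apply: inv_inj; apply: tauK. Qed.

Lemma R_swap s : R (map (tau k) s) = R s.
Proof. by rewrite /R !cell_swap tau_k tau_k1 eq_sym [_.2 == _]eq_sym. Qed.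

Lemma G_swap m s : G m (map (tau k) s) = G (tau k m) s.
Proof. by rewrite /G cell_swap. Qed.

Lemma syt_swap s : is_syt D s -> ~~ R s -> is_syt D (map (tau k) s).
Proof.
move=> Hs nR; apply/andP; split.
  apply: uniq_perm; first by rewrite map_inj_uniq ?(syt_uniq Hs) //; apply: inv_inj; apply: tauK.
    exact: iota_uniq.
  move=> x; rewrite -{1}(tauK k x) mem_map; last by apply: inv_inj; apply: tauK.
  rewrite (syt_mem Hs) mem_iota /tau; do !case: eqP => //; lia.
apply/allP => a Ha; apply/allP => b Hb; rewrite !fill_swap.
have key : ~~ ((fill D s a == k) && (fill D s b == k.+1)) \/ ~~ ((a.1 == b.1) || (a.2 == b.2)).
  case: (boolP ((fill D s a == k) && (fill D s b == k.+1))) => [/andP[/eqP fa /eqP fb]|]; last by left.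
  right; move: nR; by rewrite /R -fb -fa !(cell_fill Hs).
apply/andP; split; apply/implyP => /andP[/eqP e lt]; apply: tau_lt.
- exact: syt_row.
- by case: key => //; rewrite e eqxx.
- exact: syt_col.
- by case: key => //; rewrite e eqxx orbT.
Qed.

Definition swp s := if R s then s else map (tau k) s.

Lemma swpK s : swp (swp s) = s.
Proof.
rewrite /swp; case: (boolP (R s)) => [->|nR] //.
by rewrite R_swap (negbTE nR) (mapK (tauK k)).
Qed.

Lemma swpS s : is_syt D s -> is_syt D (swp s).
Proof. by rewrite /swp; case: (boolP (R s)) => // nR Hs; apply: syt_swap. Qed.

Lemma partB : count (fun s => G k.+1 s && ~~ R s) (syts D) =
              count (fun s => G k s && ~~ R s) (syts D).
Proof.
have P : perm_eq (map swp (syts D)) (syts D).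
  apply: uniq_perm; last 1 first.
  - move=> x; apply/mapP/idP => [[y Hy ->]|Hx]; first by rewrite memS swpS // -memS.
    by exists (swp x); rewrite ?swpK // memS swpS // -memS.
  - rewrite map_inj_in_uniq ?uniqS // => x y _ _ e.
    by rewrite -(swpK x) e swpK.
  - exact: uniqS.
rewrite -(permP P) count_map; apply: eq_in_count => s Hs /=.
rewrite /swp; case: (boolP (R s)) => [->|nR]; first by rewrite !andbF.
by rewrite R_swap G_swap tau_k1 nR.
Qed.

Lemma step : count (G k.+1) (syts D) = count (G k) (syts D) + count (Hk k) (syts D).
Proof.
rewrite (count_split _ R) [count (G k) _](count_split _ R) partB.
rewrite (@count_add _ (fun s => G k.+1 s && R s) (fun s => G k s && R s) (Hk k)); first by rewrite addnAC.
by move=> s; rewrite memS => Hs; apply: partA.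
Qed.
End K.

Lemma G1 : count (G 1) (syts D) = 0.
Proof.
rewrite (@eq_in_count _ _ pred0) ?count_pred0 // => s; rewrite memS => Hs /=.
rewrite /G; case: (boolP (1 \in s)) => h1; last first.
  by rewrite /cell nth_default // memNindex // -(syt_size Hs) leqnn.
have uD := cell_in Hs h1; have fu := fill_cell Hs h1.
case: (ltnP 1 (cell s 1).2) => h; last by apply/negbTE; rewrite -leqNgt; apply: leq_trans h hc.
case: (Dmin uD h) => v vD /orP [/andP[/eqP e lt]|/andP[/eqP e lt]].
- have := syt_row Hs vD uD e lt; rewrite fu; have := fill_in Hs vD; rewrite (syt_mem Hs); lia.
- have := syt_col Hs vD uD e lt; rewrite fu; have := fill_in Hs vD; rewrite (syt_mem Hs); lia.
Qed.

Lemma tele m : m < n -> sumn [seq count (Hk k) (syts D) | k <- iota 1 m] = count (G m.+1) (syts D).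
Proof.
elim: m => [|m IH] hm; first by rewrite G1.
rewrite (_ : iota 1 m.+1 = iota 1 m ++ [:: m.+1]); last by rewrite -{1}[m.+1]addn1 iotaD add1n.
rewrite map_cat sumn_cat IH; last lia.
rewrite /= addn0 (@step m.+1) //; lia.
Qed.

Theorem core : num_hadj D c = num_max_right D c.
Proof.
rewrite /num_hadj.
have -> : [seq count (hadj_in_col D s c) D | s <- syts D] =
          [seq count (fun k => Hk k s) (iota 1 n) | s <- syts D].
  by apply/eq_in_map => s; rewrite memS => Hs; apply: syt_count.
rewrite (sumn_exchange (fun s k => Hk k s)).
rewrite /num_max_right.
case En: n => [|m].
  rewrite /=; apply/esym/eqP; rewrite -leqn0 leqNgt -has_count; apply/hasPn => s _.
  by case: D En.
rewrite (_ : iota 1 m.+1 = iota 1 m ++ [:: m.+1]); last by rewrite -{1}[m.+1]addn1 iotaD add1n.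
rewrite map_cat sumn_cat tele; last lia.
rewrite /= addn0.
rewrite (@eq_in_count _ (Hk m.+1) pred0); last first.
  move=> s; rewrite memS => Hs /=; apply/negbTE; apply/negP.
  case/and4P => _ _ wD /eqP fw; have := fill_in Hs wD; rewrite (syt_mem Hs) fw; have h : m.+1 \in s by rewrite (syt_mem Hs); lia.
  rewrite (fill_cell Hs h); lia.
rewrite count_pred0 addn0; apply: eq_in_count => s; rewrite memS => Hs.
have hn : m.+1 \in s by rewrite (syt_mem Hs); lia.
apply/idP/hasP => [h|[u Hu /andP[/eqP fu lt]]].
  by exists (cell s m.+1); rewrite ?(cell_in Hs) // (fill_cell Hs) // eqxx.
by rewrite /G -fu (cell_fill Hs).
Qed.
End Core.
Lemma uniq_rows (r : seq nat) (f : nat -> seq (nat * nat)) :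
  uniq r -> (forall i, uniq (f i)) -> (forall i u, u \in f i -> u.1 = i.+1) ->
  uniq (flatten (map f r)).
Proof.
move=> + Hu Hf; elim: r => //= a r IH /andP[na ur].
rewrite cat_uniq Hu IH // andbT.
apply/hasPn => x /flattenP [t /mapP [b Hb ->] Hx]; apply/negP => Hxa.
have e1 := Hf _ _ Hx; have e2 := Hf _ _ Hxa.
move: na; have -> : a = b by rewrite e2 in e1; case: e1.
by rewrite Hb.
Qed.

Lemma mem_yd l i j : ((i, j) \in young_diagram l) = [&& 0 < i, i <= size l, 0 < j & j <= nth 0 l i.-1].
Proof.
apply/flattenP/idP => [[t /mapP [i' Hi' ->] /mapP [j' Hj' [-> ->]]]|].
  rewrite mem_iota in Hi'; rewrite mem_iota in Hj'; simpl; lia.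
case/and4P => h1 h2 h3 h4.
exists [seq (i.-1.+1, j'.+1) | j' <- iota 0 (nth 0 l i.-1)].
  apply/mapP; exists i.-1 => //; rewrite mem_iota; lia.
apply/mapP; exists j.-1; first by rewrite mem_iota; lia.
congr pair; lia.
Qed.

Lemma mem_sd l i j : ((i, j) \in shifted_diagram l) = [&& 0 < i, i <= size l, i <= j & j < i + nth 0 l i.-1].
Proof.
apply/flattenP/idP => [[t /mapP [i' Hi' ->] /mapP [j' Hj' [-> ->]]]|].
  rewrite mem_iota in Hi'; rewrite mem_iota in Hj'; simpl; lia.
case/and4P => h1 h2 h3 h4.
exists [seq (i.-1.+1, (j' + i.-1).+1) | j' <- iota 0 (nth 0 l i.-1)].
  apply/mapP; exists i.-1 => //; rewrite mem_iota; lia.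
apply/mapP; exists (j - i); first by rewrite mem_iota; lia.
congr pair; lia.
Qed.

Lemma yd_uniq l : uniq (young_diagram l).
Proof.
apply: uniq_rows; first exact: iota_uniq.
  move=> i; rewrite map_inj_uniq ?iota_uniq // => a b [] //.
by move=> i u /mapP [j _ ->].
Qed.

Lemma sd_uniq l : uniq (shifted_diagram l).
Proof.
apply: uniq_rows; first exact: iota_uniq.
  move=> i; rewrite map_inj_uniq ?iota_uniq // => a b [] e; lia.
by move=> i u /mapP [j _ ->].
Qed.

Lemma yd_cont l i a b x : (i,a) \in young_diagram l -> (i,b) \in young_diagram l -> a < x < b -> (i,x) \in young_diagram l.
Proof. rewrite !mem_yd; lia. Qed.

Lemma sd_cont l i a b x : (i,a) \in shifted_diagram l -> (i,b) \in shifted_diagram l -> a < x < b -> (i,x) \in shifted_diagram l.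
Proof. rewrite !mem_sd; lia. Qed.

Lemma yd_min l u : u \in young_diagram l -> 1 < u.2 ->
  exists2 v, v \in young_diagram l & ((v.1 == u.1) && (v.2 < u.2)) || ((v.2 == u.2) && (v.1 < u.1)).
Proof.
case: u => i j; rewrite mem_yd /= => H h; exists (i, j.-1).
  rewrite mem_yd; lia.
rewrite /= eqxx /=; lia.
Qed.

Lemma sd_min l u : is_strict_partition l -> u \in shifted_diagram l -> 1 < u.2 ->
  exists2 v, v \in shifted_diagram l & ((v.1 == u.1) && (v.2 < u.2)) || ((v.2 == u.2) && (v.1 < u.1)).
Proof.
case/andP => Hs Hp; case: u => i j; rewrite mem_sd /= => H h.
case: (ltnP i j) => hij.
  exists (i, j.-1); first by rewrite mem_sd; lia.
  rewrite /= eqxx /=; lia.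
have eij : i = j by lia.
subst j.
have tr : transitive (fun x y : nat => y < x) by move=> a b c' h1 h2; lia.
have lt : nth 0 l i.-1 < nth 0 l i.-2.
  have := sorted_ltn_nth tr 0 Hs => /(_ i.-2 i.-1); rewrite !inE; apply; lia.
have pos : 0 < nth 0 l i.-1.
  move/allP: Hp => Hp; apply: Hp; rewrite mem_nth //; case/and4P: H => _ h2 _ _; apply: (leq_trans _ h2); lia.
exists (i.-1, i); first by rewrite mem_sd; lia.
rewrite /= eqxx /=; lia.
Qed.

Theorem mainTheorem11 (l : seq nat) (c : nat) (hc : 1 <= c) :
  (is_partition l ->
     num_hadj (young_diagram l) c = num_max_right (young_diagram l) c) /\
  (is_strict_partition l ->
     num_hadj (shifted_diagram l) c = num_max_right (shifted_diagram l) c).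
Proof.
split=> [_|Hl].
  apply: core => //; [exact: yd_uniq | exact: yd_cont | exact: yd_min].
apply: core => //; [exact: sd_uniq | exact: sd_cont | move=> u; exact: sd_min].
Qed.
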